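(* For every $n\ge1$, the $n\times n$ grid communication graph (with a direction assignment giving adjacent circles opposite directions) has exactly $n$ rings, each of length $2n\pi$, and each ring hits each of the four walls exactly once.
   Context: Grid. The $n\times m$ grid communication graph consists of $nm$ pairwise disjoint unit circles, circle $(i,j)$ in row $i$ (rows horizontal, row 1 on top) and column $j$ (columns vertical, column 1 on the left), centres on a square lattice, circle $(i,j)$ adjacent exactly to the existing circles $(i\pm1,j)$, $(i,j\pm1)$. For adjacent circles $C_i,C_j$, the link position $\phi_{ij}$ is the point of $C_i$ closest to $C_j$. A direction assignment gives each circle $C$ a direction $g(C)\in\{1,-1\}$ (counterclockwise/clockwise), with $g(C_i)=-g(C_j)$ for adjacent circles. Rings. Trace a point moving along a circle $C_i$ in direction $g(C_i)$; whenever it reaches a link position $\phi_{ij}$ of its current circle, it passes to $C_j$ at $\phi_{ji}$ and continues along $C_j$ in direction $g(C_j)$. This motion is periodic and the closed curve it traces is a ring. The circles decompose into rings overlapping only at link positions. The length of a ring is the total length of the circle arcs forming it. Walls. A ring hits the top wall each time it passes through the topmost point of a circle of row 1; similarly bottom wall (bottommost points of circles of the last row), left wall (leftmost points of circles of column 1) and right wall (rightmost points of circles of the last column). *)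

(* Defs.v *)
From Stdlib Require Import ZArith Reals.
From mathcomp Require Import all_boot.

Set Implicit Arguments.
Unset Strict Implicit.
Unset Printing Implicit Defensive.

(* Circles of the n x m grid: circle (i,j) is row i (0 = top row),
   column j (0 = leftmost column), 0-based. *)
Definition cell (n m : nat) := ('I_n * 'I_m)%type.

(* The four compass points of a unit circle, indexed by their angle
   k * pi/2 : 0 = rightmost (E), 1 = topmost (N), 2 = leftmost (W),
   3 = bottommost (S).  Counterclockwise motion goes k -> k+1 (mod 4). *)
Definition rotd (k : nat) (d : 'I_4) : 'I_4 := inord ((d + k) %% 4).
Definition dirE : 'I_4 := inord 0.
Definition dirN : 'I_4 := inord 1.
Definition dirW : 'I_4 := inord 2.
Definition dirS : 'I_4 := inord 3.

Definition mkcell (n m i j : nat) : option (cell n m) :=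
  match (insub i : option 'I_n), (insub j : option 'I_m) with
  | Some a, Some b => Some (a, b)
  | _, _ => None
  end.

Definition nbr (n m : nat) (d : 'I_4) (c : cell n m) : option (cell n m) :=
  let i := nat_of_ord c.1 in let j := nat_of_ord c.2 in
  match nat_of_ord d with
  | 0 => mkcell n m i j.+1
  | 1 => if i is i'.+1 then mkcell n m i' j else None
  | 2 => if j is j'.+1 then mkcell n m i j' else None
  | _ => mkcell n m i.+1 j
  end.

Definition adjacent (n m : nat) (c c' : cell n m) : Prop :=
  exists d : 'I_4, nbr d c = Some c'.

(* A direction assignment: g c = 1 (counterclockwise) or -1 (clockwise),
   opposite on adjacent circles. *)
Definition direction_assignment (n m : nat) (g : cell n m -> Z) : Prop :=
  (forall c, g c = 1%Z \/ g c = (-1)%Z) /\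
  (forall c c', adjacent c c' -> g c = (- g c')%Z).

(* The link position phi_{cc'} is the compass point d of c with
   nbr d c = Some c' (the point of c closest to c').
   A state (c, d) of the motion means: the moving point is at compass
   point d of circle c and is about to traverse the quarter arc of c
   starting at d in direction g c.  One step traverses that quarter arc
   (length pi/2) to the next compass point d'; if d' is a link position
   phi_{cc'} the point passes to c' at phi_{c'c} (the opposite compass
   point of c'), otherwise it stays on c. *)
Definition qarc (n m : nat) := (cell n m * 'I_4)%type.

Definition step (n m : nat) (g : cell n m -> Z) (a : qarc n m) : qarc n m :=
  let c := a.1 in
  let d' := if Z.eqb (g c) 1%Z then rotd 1 a.2 else rotd 3 a.2 in
  match nbr d' c with
  | Some c' => (c', rotd 2 d')
  | None => (c, d')
  end.

Definition ring_of (n m : nat) (g : cell n m -> Z) (a : qarc n m) : {set qarc n m} :=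
  [set b | fconnect (step g) a b].

Definition rings (n m : nat) (g : cell n m -> Z) : {set {set qarc n m}} :=
  [set ring_of g a | a : qarc n m].

Definition ring_length (n m : nat) (Rg : {set qarc n m}) : R :=
  Rmult (INR #|Rg|) (Rdiv PI 2).

(* Number of times (per period) a ring passes through the topmost point
   of a circle of row 1 (resp. bottommost point of the last row, leftmost
   point of column 1, rightmost point of the last column).  These points
   are never link positions, so passing through them is exactly being in
   the corresponding state. *)
Definition hits_top (n m : nat) (Rg : {set qarc n m}) : nat :=
  #|[set a in Rg | (nat_of_ord a.1.1 == 0) && (a.2 == dirN)]|.
Definition hits_bottom (n m : nat) (Rg : {set qarc n m}) : nat :=
  #|[set a in Rg | (nat_of_ord a.1.1 == n.-1) && (a.2 == dirS)]|.
Definition hits_left (n m : nat) (Rg : {set qarc n m}) : nat :=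
  #|[set a in Rg | (nat_of_ord a.1.2 == 0) && (a.2 == dirW)]|.
Definition hits_right (n m : nat) (Rg : {set qarc n m}) : nat :=
  #|[set a in Rg | (nat_of_ord a.1.2 == m.-1) && (a.2 == dirE)]|.

(* Main.v *)
Require Import Defs.
From Stdlib Require Import ZArith Reals Lia.
From mathcomp Require Import all_boot zify.
Set Implicit Arguments.
Unset Strict Implicit.


Definition oR (d : nat) : Z := match d with 1 => (-1)%Z | 3 => 1%Z | _ => 0%Z end.
Definition oC (d : nat) : Z := match d with 0 => 1%Z | 2 => (-1)%Z | _ => 0%Z end.

Lemma rotdE k (d : 'I_4) : nat_of_ord (rotd k d) = (d + k) %% 4.
Proof. by rewrite /rotd inordK // ltn_pmod. Qed.

Lemma mkcell_some n m i j c : mkcell n m i j = Some c -> nat_of_ord c.1 = i /\ nat_of_ord c.2 = j.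
Proof.
rewrite /mkcell; case: (@insubP _ _ 'I_n i) => [a _ Ea|_]; case: (@insubP _ _ 'I_m j) => [b _ Eb|_] //.
by case=> <-; split.
Qed.

Lemma mkcell_none n m i j : mkcell n m i j = None -> ~ (i < n /\ j < m).
Proof.
rewrite /mkcell; case: (@insubP _ _ 'I_n i) => [a Hi Ea|Hi]; case: (@insubP _ _ 'I_m j) => [b Hj Eb|Hj] //;
 try (move=> _ [/= h1 h2]; rewrite ?h1 ?h2 in Hi Hj; done).
Qed.

Lemma nbr_some n m (d : 'I_4) (c c' : cell n m) : nbr d c = Some c' ->
  Z.of_nat c'.1 = (Z.of_nat c.1 + oR d)%Z /\ Z.of_nat c'.2 = (Z.of_nat c.2 + oC d)%Z.
Proof.
case: c => i j; case: d => [[|[|[|[|d]]]] Hd] //; rewrite /nbr /=.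
- by move/mkcell_some => [-> ->] /=; lia.
- case E: (nat_of_ord i) => [|i'] //. move/mkcell_some => [-> ->]; rewrite /oR /oC; lia.
- case E: (nat_of_ord j) => [|j'] //. move/mkcell_some => [-> ->]; rewrite /oR /oC; lia.
- by move/mkcell_some => [-> ->] /=; lia.
Qed.

Lemma nbr_none n m (d : 'I_4) (c : cell n m) : nbr d c = None ->
  ~ ((0 <= Z.of_nat c.1 + oR d < Z.of_nat n)%Z /\ (0 <= Z.of_nat c.2 + oC d < Z.of_nat m)%Z).
Proof.
case: c => i j; case: d => [[|[|[|[|d]]]] Hd] //; rewrite /nbr /=.
- move/mkcell_none => H. have := ltn_ord i. lia.
- case E: (nat_of_ord i) => [|i'] //; first lia. move/mkcell_none => H. have := ltn_ord j. lia.
- case E: (nat_of_ord j) => [|j'] //; first lia. move/mkcell_none => H. have := ltn_ord i. lia.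
- move/mkcell_none => H. have := ltn_ord j. lia.
Qed.


Section P2.

Definition succ4 (d : nat) : nat := match d with 0 => 1 | 1 => 2 | 2 => 3 | _ => 0 end.
Definition pred4 (d : nat) : nat := match d with 0 => 3 | 1 => 0 | 2 => 1 | _ => 2 end.
Definition opp4 (d : nat) : nat := match d with 0 => 2 | 1 => 3 | 2 => 0 | _ => 1 end.
Definition nxt (gam : Z) (d : nat) : nat := if Z.eqb gam 1 then succ4 d else pred4 d.
Definition vRf gam d : Z := (oR (nxt gam d) - oR d)%Z.
Definition vCf gam d : Z := (oC (nxt gam d) - oC d)%Z.
Definition Lf (nn i j : Z) (d : nat) (gam : Z) : Z :=
  let R := (2 * i + 1 + oR d)%Z in let C := (2 * j + 1 + oC d)%Z in
  if Z.eqb (vRf gam d) (- vCf gam d) then Z.min (R + C) (4 * nn - R - C)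
  else Z.abs (R - C).
Definition Pf (nn i : Z) (d : nat) (gam : Z) : Z :=
  let R := (2 * i + 1 + oR d)%Z in
  if Z.eqb (vRf gam d) 1 then R else (4 * nn - R)%Z.

Local Arguments Z.mul : simpl never.
Local Arguments Z.of_nat : simpl never.

Lemma core_some nn i j d gam i' j' : (d < 4)%N -> (gam = 1 \/ gam = -1)%Z ->
  (0 <= i < nn)%Z -> (0 <= j < nn)%Z ->
  i' = (i + oR (nxt gam d))%Z -> j' = (j + oC (nxt gam d))%Z ->
  (0 <= i' < nn)%Z -> (0 <= j' < nn)%Z ->
  Lf nn i' j' (opp4 (nxt gam d)) (- gam) = Lf nn i j d gam /\
  (Pf nn i' (opp4 (nxt gam d)) (- gam) = Pf nn i d gam + 1 \/
   (Pf nn i d gam = 4 * nn - 1 /\ Pf nn i' (opp4 (nxt gam d)) (- gam) = 0))%Z.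
Proof.
case: d => [|[|[|[|d]]]] // _ [->|->] Hi Hj -> -> /=; rewrite /Lf /Pf /=; lia.
Qed.

Lemma core_none nn i j d gam : (d < 4)%N -> (gam = 1 \/ gam = -1)%Z ->
  (0 <= i < nn)%Z -> (0 <= j < nn)%Z ->
  ~ ((0 <= i + oR (nxt gam d) < nn)%Z /\ (0 <= j + oC (nxt gam d) < nn)%Z) ->
  Lf nn i j (nxt gam d) gam = Lf nn i j d gam /\
  (Pf nn i (nxt gam d) gam = Pf nn i d gam + 1 \/
   (Pf nn i d gam = 4 * nn - 1 /\ Pf nn i (nxt gam d) gam = 0))%Z.
Proof.
case: d => [|[|[|[|d]]]] // _ [->|->] Hi Hj /=; rewrite /Lf /Pf /=; lia.
Qed.

Lemma core_range nn i d gam : (d < 4)%N -> (gam = 1 \/ gam = -1)%Z ->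
  (0 <= i < nn)%Z -> (0 <= Pf nn i d gam < 4 * nn)%Z.
Proof.
case: d => [|[|[|[|d]]]] // _ [->|->] Hi /=; rewrite /Pf /=; lia.
Qed.

Lemma rotd1 (d : 'I_4) : nat_of_ord (rotd 1 d) = succ4 d.
Proof. by rewrite rotdE; case: d => [[|[|[|[|d]]]] Hd]. Qed.
Lemma rotd3 (d : 'I_4) : nat_of_ord (rotd 3 d) = pred4 d.
Proof. by rewrite rotdE; case: d => [[|[|[|[|d]]]] Hd]. Qed.
Lemma rotd2 (d : 'I_4) : nat_of_ord (rotd 2 d) = opp4 d.
Proof. by rewrite rotdE; case: d => [[|[|[|[|d]]]] Hd]. Qed.

Definition Lz n g (a : qarc n n) : Z := Lf (Z.of_nat n) (Z.of_nat a.1.1) (Z.of_nat a.1.2) a.2 (g a.1).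
Definition Pz n g (a : qarc n n) : Z := Pf (Z.of_nat n) (Z.of_nat a.1.1) a.2 (g a.1).

Lemma step_inv n g : direction_assignment g -> forall a : qarc n n,
  Lz g (step g a) = Lz g a /\
  (Pz g (step g a) = (Pz g a + 1)%Z \/ (Pz g a = 4 * Z.of_nat n - 1 /\ Pz g (step g a) = 0)%Z).
Proof.
move=> [Hpm Hadj] [c d].
have Hi := ltn_ord c.1; have Hj := ltn_ord c.2.
rewrite /step /=.
set d' := (if _ then _ else _).
have Hd' : nat_of_ord d' = nxt (g c) d.
  rewrite /d' /nxt; case: (Hpm c) => ->; by rewrite ?rotd1 ?rotd3.
have Hd4 := ltn_ord d.
case E: (nbr d' c) => [c'|].
- have [H1 H2] := nbr_some E.
  have Hg : g c = (- g c')%Z by apply: Hadj; exists d'.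
  have Hc' : g c' = (- g c)%Z by lia.
  rewrite Hd' in H1 H2.
  have Hi' := ltn_ord c'.1; have Hj' := ltn_ord c'.2.
  rewrite /Lz /Pz /= rotd2 Hd' Hc'.
  apply: core_some => //; try lia.
- have H := nbr_none E. rewrite Hd' in H.
  rewrite /Lz /Pz /= Hd'.
  apply: core_none => //; lia.
Qed.

Lemma Pz_range n g : direction_assignment g -> forall a : qarc n n,
  (0 <= Pz g a < 4 * Z.of_nat n)%Z.
Proof.
move=> [Hpm _] [c d]; rewrite /Pz /=. apply: core_range => //.
have := ltn_ord c.1; lia.
Qed.

Lemma wall_top nn j gam : (gam = 1 \/ gam = -1)%Z -> (0 <= j < nn)%Z ->
  Lf nn 0 j 1 gam = (2 * j + 1)%Z.
Proof. move=> [->|->] Hj; rewrite /Lf /=; lia. Qed.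
Lemma wall_bot nn j gam : (gam = 1 \/ gam = -1)%Z -> (0 <= j < nn)%Z ->
  Lf nn (nn - 1) j 3 gam = (2 * nn - 2 * j - 1)%Z.
Proof. move=> [->|->] Hj; rewrite /Lf /=; lia. Qed.
Lemma wall_left nn i gam : (gam = 1 \/ gam = -1)%Z -> (0 <= i < nn)%Z ->
  Lf nn i 0 2 gam = (2 * i + 1)%Z.
Proof. move=> [->|->] Hj; rewrite /Lf /=; lia. Qed.
Lemma wall_right nn i gam : (gam = 1 \/ gam = -1)%Z -> (0 <= i < nn)%Z ->
  Lf nn i (nn - 1) 0 gam = (2 * nn - 2 * i - 1)%Z.
Proof. move=> [->|->] Hj; rewrite /Lf /=; lia. Qed.

End P2.

Section Gen.
Variables (T : finType) (f : T -> T) (n N : nat) (L : T -> 'I_n) (p : T -> nat).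
Hypothesis HL : forall a, L (f a) = L a.
Hypothesis Hp : forall a, p (f a) = (p a).+1 %% N.
Hypothesis HT : #|T| = n * N.
Hypothesis Hsurj : forall k, exists a, L a = k.

Let F k := [set b | L b == k].

Lemma L_iter t a : L (iter t f a) = L a.
Proof. by elim: t => //= t IH; rewrite HL. Qed.

Lemma p_iter t a : p (iter t f a) %% N = (p a + t) %% N.
Proof.
elim: t => [|t IH] /=; first by rewrite addn0.
by rewrite Hp modn_mod -[(p _).+1]addn1 -modnDml IH modnDml addnS addn0 addnS.
Qed.

Let S a := [set iter (nat_of_ord t) f a | t : 'I_N].

Lemma card_S a : #|S a| = N.
Proof.
rewrite card_imset ?card_ord // => t1 t2 E.
apply: val_inj => /=.
have := p_iter t1 a; rewrite E p_iter => /eqP; rewrite eqn_modDl => /eqP.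
by rewrite !modn_small.
Qed.

Lemma S_sub a : S a \subset F (L a).
Proof. by apply/subsetP => _ /imsetP [t _ ->]; rewrite inE L_iter. Qed.

Lemma sumF : \sum_(k < n) #|F k| = #|T|.
Proof.
rewrite -sum1_card (partition_big L xpredT) //=.
apply: eq_bigr => k _. rewrite sum1_card; by apply: eq_card => x; rewrite /F inE.
Qed.


Lemma cardF k : #|F k| = N.
Proof.
have [a Ha] := Hsurj k.
have ge : forall k', N <= #|F k'|.
  move=> k'; have [b <-] := Hsurj k'.
  by rewrite -(card_S b) subset_leq_card // S_sub.
have := sumF; rewrite HT (bigD1 k) //=.
have : \sum_(k' < n | k' != k) N <= \sum_(k' < n | k' != k) #|F k'|.
  by apply: leq_sum => k' _; apply: ge.
rewrite sum_nat_const cardC1 card_ord.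
have := ge k.
have E : n * N = N + n.-1 * N.
  by rewrite -mulSn prednK // (leq_ltn_trans (leq0n _) (ltn_ord k)).
rewrite E. move=> h1 h2 h3. move: h2 h3. set s1 := (X in _ <= X). set s2 := (X in _ + X = _). have -> : s2 = s1 by []. lia.
Qed.

Lemma orbitF a : [set b | fconnect f a b] = F (L a).
Proof.
have SF : S a = F (L a).
  apply/eqP; rewrite eqEcard S_sub /= card_S cardF //.
apply/eqP; rewrite eqEsubset; apply/andP; split.
- apply/subsetP => b; rewrite inE => /iter_findex <-.
  by rewrite /F inE L_iter.
- rewrite -SF; apply/subsetP => _ /imsetP [t _ ->].
  by rewrite inE fconnect_iter.
Qed.

End Gen.

Lemma dirNv : nat_of_ord dirN = 1. Proof. by rewrite /dirN inordK. Qed.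
Lemma dirSv : nat_of_ord dirS = 3. Proof. by rewrite /dirS inordK. Qed.
Lemma dirEv : nat_of_ord dirE = 0. Proof. by rewrite /dirE inordK. Qed.
Lemma dirWv : nat_of_ord dirW = 2. Proof. by rewrite /dirW inordK. Qed.

Section Main.
Variables (n' : nat) (g : cell n'.+1 n'.+1 -> Z).
Hypothesis DA : direction_assignment g.
Local Notation n := n'.+1.

Lemma Lz_top (a : qarc n n) : nat_of_ord a.1.1 = 0 -> a.2 = dirN ->
  Lz g a = (2 * Z.of_nat a.1.2 + 1)%Z.
Proof.
case: a => [[i j] d] /= Hi ->; rewrite /Lz /= dirNv Hi.
apply: wall_top; first exact: DA.1. have := ltn_ord j; lia.
Qed.
Lemma Lz_bot (a : qarc n n) : nat_of_ord a.1.1 = n' -> a.2 = dirS ->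
  Lz g a = (2 * Z.of_nat n - 2 * Z.of_nat a.1.2 - 1)%Z.
Proof.
case: a => [[i j] d] /= Hi ->; rewrite /Lz /= dirSv.
have -> : Z.of_nat i = (Z.of_nat n - 1)%Z by lia.
apply: wall_bot; first exact: DA.1. have := ltn_ord j; lia.
Qed.
Lemma Lz_left (a : qarc n n) : nat_of_ord a.1.2 = 0 -> a.2 = dirW ->
  Lz g a = (2 * Z.of_nat a.1.1 + 1)%Z.
Proof.
case: a => [[i j] d] /= Hj ->; rewrite /Lz /= dirWv Hj.
apply: wall_left; first exact: DA.1. have := ltn_ord i; lia.
Qed.
Lemma Lz_right (a : qarc n n) : nat_of_ord a.1.2 = n' -> a.2 = dirE ->
  Lz g a = (2 * Z.of_nat n - 2 * Z.of_nat a.1.1 - 1)%Z.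
Proof.
case: a => [[i j] d] /= Hj ->; rewrite /Lz /= dirEv.
have -> : Z.of_nat j = (Z.of_nat n - 1)%Z by lia.
apply: wall_right; first exact: DA.1. have := ltn_ord i; lia.
Qed.

Local Arguments Z.mul : simpl never.
Local Arguments Z.of_nat : simpl never.

Lemma div2h (x y : Z) : y = (x * 2)%Z -> (y / 2 = x)%Z.
Proof. move=> ->; apply: Z.div_mul; lia. Qed.

Definition lab (a : qarc n n) : 'I_n := inord (Z.to_nat ((Lz g a - 1) / 2)).
Definition pos (a : qarc n n) : nat := Z.to_nat (Pz g a).

Lemma lab_step a : lab (step g a) = lab a.
Proof. by rewrite /lab (step_inv DA a).1. Qed.

Lemma pos_step a : pos (step g a) = (pos a).+1 %% (4 * n).
Proof.
have R1 := Pz_range DA a; have R2 := Pz_range DA (step g a).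
rewrite /pos; case: (step_inv DA a).2 => [h|[h1 h2]].
- rewrite modn_small; lia.
- have -> : (Z.to_nat (Pz g a)).+1 = 4 * n by lia.
  rewrite modnn; lia.
Qed.

Lemma card_qarc : #|{: qarc n n}| = n * (4 * n).
Proof. rewrite !card_prod !card_ord. nia. Qed.

Definition topst (k : 'I_n) : qarc n n := ((ord0, k), dirN).

Lemma lab_top (a : qarc n n) : nat_of_ord a.1.1 = 0 -> a.2 = dirN -> lab a = a.1.2.
Proof.
move=> h1 h2; apply: val_inj => /=; rewrite /lab (Lz_top h1 h2) (@div2h (Z.of_nat a.1.2)); last lia.
have := ltn_ord a.1.2; rewrite Nat2Z.id inordK //.
Qed.
Lemma lab_bot (a : qarc n n) : nat_of_ord a.1.1 = n' -> a.2 = dirS -> nat_of_ord (lab a) = n' - a.1.2.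
Proof.
move=> h1 h2; have := ltn_ord a.1.2.
rewrite /lab (Lz_bot h1 h2) (@div2h (Z.of_nat n' - Z.of_nat a.1.2)); last lia.
move=> *; rewrite inordK; lia.
Qed.
Lemma lab_left (a : qarc n n) : nat_of_ord a.1.2 = 0 -> a.2 = dirW -> lab a = a.1.1.
Proof.
move=> h1 h2; apply: val_inj => /=; rewrite /lab (Lz_left h1 h2) (@div2h (Z.of_nat a.1.1)); last lia.
have := ltn_ord a.1.1; rewrite Nat2Z.id inordK //.
Qed.
Lemma lab_right (a : qarc n n) : nat_of_ord a.1.2 = n' -> a.2 = dirE -> nat_of_ord (lab a) = n' - a.1.1.
Proof.
move=> h1 h2; have := ltn_ord a.1.1.
rewrite /lab (Lz_right h1 h2) (@div2h (Z.of_nat n' - Z.of_nat a.1.1)); last lia.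
move=> *; rewrite inordK; lia.
Qed.

Lemma lab_surj k : exists a, lab a = k.
Proof. exists (topst k); exact: lab_top. Qed.

End Main.

Lemma card_single (T : finType) (A : {set T}) (Q : pred T) w :
  w \in A -> Q w -> (forall x, x \in A -> Q x -> x = w) -> #|[set x in A | Q x]| = 1.
Proof.
move=> hA hQ hu; have -> : [set x in A | Q x] = [set w]; last exact: cards1.
apply/setP => x; rewrite !inE; apply/andP/eqP => [[h1 h2]|->]; [exact: hu | by split].
Qed.

Theorem lemma13 (n : nat) (g : cell n n -> Z) :
  (1 <= n)%N ->
  direction_assignment g ->
  #|rings g| = n /\
  (forall Rg : {set qarc n n}, Rg \in rings g ->
     ring_length Rg = Rmult (Rmult 2 (INR n)) PI /\
     hits_top Rg = 1%N /\ hits_bottom Rg = 1%N /\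
     hits_left Rg = 1%N /\ hits_right Rg = 1%N).
Proof.
case: n g => [//|n'] g _ DA.
have Horb : forall a, ring_of g a = [set b | lab g b == lab g a].
  move=> a; exact: (orbitF (lab_step DA) (pos_step DA) (card_qarc n') (lab_surj DA) a).
have Hcard : forall k, #|[set b | lab g b == k]| = 4 * n'.+1.
  move=> k; exact: (cardF (lab_step DA) (pos_step DA) (card_qarc n') (lab_surj DA) k).
have Hrings : rings g = [set [set b | lab g b == k] | k : 'I_n'.+1].
  apply/setP => R; apply/imsetP/imsetP => [[a _ ->]|[k _ ->]].
  - by exists (lab g a) => //; rewrite Horb.
  - have [a Ha] := lab_surj DA k. by exists a => //; rewrite Horb Ha.
split.
  rewrite Hrings card_imset ?card_ord // => k1 k2 E.
  have [a Ha] := lab_surj DA k1.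
  have : a \in [set b | lab g b == k1] by rewrite inE Ha.
  by rewrite E inE Ha => /eqP.
move=> Rg; rewrite Hrings => /imsetP [k _ ->].
split.
  rewrite /ring_length Hcard.
  have -> : INR (4 * n'.+1) = Rmult (INR 4) (INR n'.+1) by rewrite -multE mult_INR.
  rewrite /Rdiv; simpl INR at 1; field.
split.
  apply: (@card_single _ _ _ ((ord0, k), dirN)).
  - by rewrite inE (lab_top DA).
  - by rewrite /= eqxx.
  - move=> [[i j] d]; rewrite inE => /eqP Hl /andP [/eqP Hi /eqP Hd].
    have := lab_top DA (a := ((i, j), d)) Hi Hd; rewrite Hl /= => <-.
    move: Hi Hd => /= Hi ->; congr (_, _, _); exact: val_inj.
have Hkn := ltn_ord k.
split.
  apply: (@card_single _ _ _ ((ord_max, inord (n' - k)), dirS)).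
  - rewrite inE; apply/eqP; apply: val_inj => /=; rewrite (lab_bot DA) //= inordK; lia.
  - by rewrite /= !eqxx.
  - move=> [[i j] d]; rewrite inE => /eqP Hl /andP [/eqP Hi /eqP Hd].
    have := ltn_ord j.
    have := lab_bot DA (a := ((i, j), d)) Hi Hd; rewrite Hl /= => Hk Hj.
    move: Hi Hd => /= Hi ->; congr (_, _, _); apply: val_inj => /=; first exact Hi.
    rewrite inordK; lia.
split.
  apply: (@card_single _ _ _ ((k, ord0), dirW)).
  - by rewrite inE (lab_left DA).
  - by rewrite /= eqxx.
  - move=> [[i j] d]; rewrite inE => /eqP Hl /andP [/eqP Hj /eqP Hd].
    have := lab_left DA (a := ((i, j), d)) Hj Hd; rewrite Hl /= => <-.
    move: Hj Hd => /= Hj ->; congr (_, _, _); exact: val_inj.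
apply: (@card_single _ _ _ ((inord (n' - k), ord_max), dirE)).
- rewrite inE; apply/eqP; apply: val_inj => /=; rewrite (lab_right DA) //= inordK; lia.
- by rewrite /= !eqxx.
- move=> [[i j] d]; rewrite inE => /eqP Hl /andP [/eqP Hj /eqP Hd].
  have := ltn_ord i.
  have := lab_right DA (a := ((i, j), d)) Hj Hd; rewrite Hl /= => Hk Hi.
  move: Hj Hd => /= Hj ->; congr (_, _, _); apply: val_inj => /=; last exact Hj.
  rewrite inordK; lia.
Qed.
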